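(* Let $s$ be one of $s(x)=\sigma(x)$ (Weierstrass sigma function), $s(x)=\sinh x$, $s(x)=x$, let $f(q,p;\alpha)=\frac{s(q+p+\alpha)s(q-p+\alpha)}{s(q+p-\alpha)s(q-p-\alpha)}$, and let $\gamma$ be a constant; set $\alpha=-2\gamma$, $\beta=\gamma$. Let $q(n_1,n_2;y,z)$ satisfy, for all $y,z$, the lattice equation $$f(q,q_{1,0};\alpha)f(q,q_{-1,0};\alpha)f(q,q_{0,1};\beta)f(q,q_{0,-1};\beta)f(q,q_{-1,-1};\gamma)f(q,q_{1,1};\gamma)=1$$ and the flows $$\frac{q_{,y}+1}{q_{,y}-1}=f(q,q_{-1,0};\alpha)f(q,q_{0,1};\beta)f(q,q_{1,1};\gamma),\qquad \frac{q_{,z}+1}{q_{,z}-1}=f(q,q_{-1,0};\alpha)f(q,q_{0,-1};\beta)f(q,q_{-1,-1};\gamma).$$ Fix an integer $j$ and put $u(2k)=q(k,j)$, $u(2k-1)=q(k,j+1)$. Then $u_{,t}:=\tfrac12(u_{,y}+u_{,z})$ satisfies, at every $n\in\mathbb Z$, $$u_{,t}=\frac{1}{f(u,u_2;2\gamma)f(u,u_1;-\gamma)f(u,u_{-1};-\gamma)-1}-\frac{1}{f(u,u_1;-\gamma)f(u,u_{-1};-\gamma)f(u,u_{-2};2\gamma)-1},$$ where $u=u(n)$, $u_m=u(n+m)$.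
   Context: Notation: $q_{i,j}=q(n_1+i,n_2+j)$; subscripts ${,y},{,z},{,t}$ denote partial derivatives. *)

(* Defs.v *)
From Stdlib Require Import Reals ZArith List.
From Coquelicot Require Import Coquelicot.
Open Scope C_scope.

Definition Cexp (z : C) : C :=
  (exp (fst z) * cos (snd z), exp (fst z) * sin (snd z))%R.
Definition Csinh (z : C) : C := (Cexp z - Cexp (- z)) / 2.

(* Weierstrass sigma function of the lattice  Z w1 + Z w2  (w1, w2 R-linearly
   independent), defined by its Weierstrass product
     sigma(x) = x * prod_{w in L\{0}} (1 - x/w) exp(x/w + x^2/(2 w^2)),
   the (absolutely convergent) product being taken as the limit of the
   products over the squares  |m|,|n| <= N. *)
Definition sym_range (N : nat) : list Z :=
  map (fun k => (Z.of_nat k - Z.of_nat N)%Z) (seq 0 (2 * N + 1)).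

Definition lattice_pts (w1 w2 : C) (N : nat) : list C :=
  map (fun mn => IZR (fst mn) * w1 + IZR (snd mn) * w2)
      (filter (fun mn => negb (Z.eqb (fst mn) 0 && Z.eqb (snd mn) 0))
              (list_prod (sym_range N) (sym_range N))).

Definition sigma_partial (w1 w2 : C) (N : nat) (x : C) : C :=
  x * fold_right Cmult 1
        (map (fun w => (1 - x / w) * Cexp (x / w + x * x / (2 * (w * w))))
             (lattice_pts w1 w2 N)).

Definition lattice_nondeg (w1 w2 : C) : Prop :=
  (fst w1 * snd w2 - snd w1 * fst w2 <> 0)%R.

Definition is_weierstrass_sigma (w1 w2 : C) (s : C -> C) : Prop :=
  lattice_nondeg w1 w2 /\
  forall x : C, filterlim (fun N => sigma_partial w1 w2 N x) eventually
                          (locally (s x)).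

Definition admissible_s (s : C -> C) : Prop :=
  (exists w1 w2, is_weierstrass_sigma w1 w2 s) \/
  (forall x, s x = Csinh x) \/ (forall x, s x = x).

Definition fqp (s : C -> C) (q p a : C) : C :=
  (s (q + p + a) * s (q - p + a)) / (s (q + p - a) * s (q - p - a)).

Definition f_nondeg (s : C -> C) (q p a : C) : Prop :=
  s (q + p + a) <> 0 /\ s (q - p + a) <> 0 /\
  s (q + p - a) <> 0 /\ s (q - p - a) <> 0.

(* u(2k) = q(k,j),  u(2k-1) = q(k,j+1) *)
Definition u_of (q : Z -> Z -> R -> R -> C) (j : Z) (n : Z) : R -> R -> C :=
  if Z.even n then q (Z.div2 n) j else q (Z.div2 (n + 1)) (j + 1)%Z.

(* Main.v *)
Require Import Defs.
From Stdlib Require Import Reals ZArith List.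
From Coquelicot Require Import Coquelicot.
Open Scope C_scope.


From Stdlib Require Import Classical Lra Lia.
Lemma C1_neq_0 : (1 : C) <> 0.
Proof. intro E. injection E as E. lra. Qed.
Lemma Cmult_integral (a b : C) : a * b = 0 -> a = 0 \/ b = 0.
Proof.
  intro E. destruct (classic (a = 0)) as [H|H]; [left; auto|right].
  replace b with ((a * b) / a) by (field; auto). rewrite E. field; auto.
Qed.
Lemma Cmult_eq_reg_r (x y c : C) : x * c = y * c -> c <> 0 -> x = y.
Proof.
  intros E H. replace x with ((x * c) / c) by (field; auto). rewrite E. field; auto.
Qed.
Lemma Cinv_neq_0 (a : C) : a <> 0 -> / a <> 0.
Proof.
  intros H E. apply C1_neq_0. replace (1:C) with (a * / a) by (field; auto).
  rewrite E. ring.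
Qed.

Lemma finv (s : C -> C) (a b c c' : C) : c' = - c -> f_nondeg s a b c ->
  fqp s a b c' = / fqp s a b c.
Proof.
  intros -> [H1 [H2 [H3 H4]]]. unfold fqp.
  replace (a + b - - c) with (a + b + c) by ring.
  replace (a - b - - c) with (a - b + c) by ring.
  replace (a + b + - c) with (a + b - c) by ring.
  replace (a - b + - c) with (a - b - c) by ring.
  field. repeat split; auto.
Qed.

Lemma fnz (s : C -> C) (a b c : C) : f_nondeg s a b c -> fqp s a b c <> 0.
Proof.
  intros [H1 [H2 [H3 H4]]]. unfold fqp. intro E.
  assert (E2 : s (a + b + c) * s (a - b + c) = 0).
  { replace (s (a + b + c) * s (a - b + c)) with
      ((s (a + b + c) * s (a - b + c) / (s (a + b - c) * s (a - b - c))) *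
       (s (a + b - c) * s (a - b - c))) by (field; split; auto).
    rewrite E. ring. }
  apply Cmult_integral in E2. destruct E2; auto.
Qed.

Lemma flow_solve (Y w : C) : w <> 1 -> (w + 1) / (w - 1) = Y ->
  Y - 1 <> 0 /\ w = (Y + 1) / (Y - 1).
Proof.
  intros Hw HY.
  assert (Hw' : w - 1 <> 0) by (intro E; apply Hw;
    replace w with ((w - 1) + 1) by ring; rewrite E; ring).
  assert (E : Y * (w - 1) = w + 1) by (subst Y; field; auto).
  assert (HY1 : Y - 1 <> 0).
  { intro E1. assert (HY0 : Y = 1) by (replace Y with ((Y - 1) + 1) by ring; rewrite E1; ring).
    rewrite HY0 in E. assert (E3 : (2 : C) = 0) by (replace (2:C) with ((w+1) - 1 * (w - 1)) by ring;
      rewrite E; ring).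
    injection E3 as E3. lra. }
  split; auto.
  replace (Y + 1) with (w * (Y - 1)).
  - field; auto.
  - replace (w * (Y - 1)) with (Y * (w - 1) + Y - w) by ring. rewrite E. ring.
Qed.

Lemma alg_even (a1 a2 b1 b2 c1 c2 wy wz : C) :
  a1 <> 0 -> a2 <> 0 -> b1 <> 0 -> b2 <> 0 -> c1 <> 0 -> c2 <> 0 ->
  wy <> 1 -> wz <> 1 ->
  a1 * a2 * b1 * b2 * c1 * c2 = 1 ->
  (wy + 1) / (wy - 1) = a2 * b1 * c2 ->
  (wz + 1) / (wz - 1) = a2 * b2 * c1 ->
  (wy + wz) / 2 = 1 / (/ a1 * / c2 * / b1 - 1) - 1 / (/ c2 * / b1 * / a2 - 1).
Proof.
  intros Ha1 Ha2 Hb1 Hb2 Hc1 Hc2 Hy Hz L FY FZ.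
  destruct (flow_solve _ _ Hy FY) as [NY EY].
  destruct (flow_solve _ _ Hz FZ) as [NZ EZ].
  assert (E1 : / a1 * / c2 * / b1 = a2 * b2 * c1).
  { apply (Cmult_eq_reg_r _ _ (a1 * c2 * b1)).
    - field_simplify; auto. rewrite <- L. ring. repeat split; auto.
    - repeat (apply Cmult_neq_0); auto. }
  assert (E2 : / c2 * / b1 * / a2 = / (a2 * b1 * c2)) by (field; repeat split; auto).
  rewrite E1, E2, EY, EZ.
  set (Y := a2 * b1 * c2) in *. set (Z := a2 * b2 * c1) in *.
  assert (HY0 : Y <> 0) by (unfold Y; repeat (apply Cmult_neq_0); auto).
  assert (NY' : / Y - 1 <> 0).
  { intro E. apply NY.
    replace (Y - 1) with (- (((/ Y - 1)) * Y)) by (field; auto).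
    rewrite E. ring. }
  field. repeat split; auto.
  intro E. apply NY. replace (Y - 1) with (- (1 - Y)) by ring. rewrite E. ring.
Qed.


Lemma alg_odd (a1 a2 b1 b2 c1 c2 wy wz : C) :
  a1 <> 0 -> a2 <> 0 -> b1 <> 0 -> b2 <> 0 -> c1 <> 0 -> c2 <> 0 ->
  wy <> 1 -> wz <> 1 ->
  a1 * a2 * b1 * b2 * c1 * c2 = 1 ->
  (wy + 1) / (wy - 1) = a2 * b1 * c2 ->
  (wz + 1) / (wz - 1) = a2 * b2 * c1 ->
  (wy + wz) / 2 = 1 / (/ a1 * / b2 * / c1 - 1) - 1 / (/ b2 * / c1 * / a2 - 1).
Proof.
  intros Ha1 Ha2 Hb1 Hb2 Hc1 Hc2 Hy Hz L FY FZ.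
  destruct (flow_solve _ _ Hy FY) as [NY EY].
  destruct (flow_solve _ _ Hz FZ) as [NZ EZ].
  assert (E1 : / a1 * / b2 * / c1 = a2 * b1 * c2).
  { apply (Cmult_eq_reg_r _ _ (a1 * b2 * c1)).
    - field_simplify; auto. rewrite <- L. ring. repeat split; auto.
    - repeat (apply Cmult_neq_0); auto. }
  assert (E2 : / b2 * / c1 * / a2 = / (a2 * b2 * c1)) by (field; repeat split; auto).
  rewrite E1, E2, EY, EZ.
  set (Y := a2 * b1 * c2) in *. set (Z := a2 * b2 * c1) in *.
  assert (HZ0 : Z <> 0) by (unfold Z; repeat (apply Cmult_neq_0); auto).
  assert (NZ' : / Z - 1 <> 0).
  { intro E. apply NZ.
    replace (Z - 1) with (- (((/ Z - 1)) * Z)) by (field; auto).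
    rewrite E. ring. }
  field. repeat split; auto.
  intro E. apply NZ. replace (Z - 1) with (- (1 - Z)) by ring. rewrite E. ring.
Qed.

Lemma ue (q : Z -> Z -> R -> R -> C) j k : u_of q j (2 * k) = q k j.
Proof.
  unfold u_of. replace (Z.even (2 * k)) with true by (rewrite Z.even_mul; reflexivity).
  replace (Z.div2 (2 * k)) with k; [reflexivity|].
  rewrite Z.div2_div, Z.mul_comm, Z.div_mul by lia. reflexivity.
Qed.

Lemma uo (q : Z -> Z -> R -> R -> C) j k : u_of q j (2 * k - 1) = q k (j + 1)%Z.
Proof.
  unfold u_of. replace (Z.even (2 * k - 1)) with false.
  2:{ replace (2 * k - 1)%Z with (2 * (k - 1) + 1)%Z by lia.
      rewrite Z.even_add, Z.even_mul. reflexivity. }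
  replace (Z.div2 (2 * k - 1 + 1)) with k; [reflexivity|].
  replace (2 * k - 1 + 1)%Z with (k * 2)%Z by lia.
  rewrite Z.div2_div, Z.div_mul by lia. reflexivity.
Qed.

Theorem mainTheorem7
  (s : C -> C) (gamma : C)
  (q qy qz : Z -> Z -> R -> R -> C) (j : Z) :
  admissible_s s ->
  (* q_{,y} and q_{,z} are the partial derivatives of q *)
  (forall n1 n2 y z, is_derive (fun y' => q n1 n2 y' z) y (qy n1 n2 y z)) ->
  (forall n1 n2 y z, is_derive (fun z' => q n1 n2 y z') z (qz n1 n2 y z)) ->
  (* genericity: all occurring f's are well defined and nonzero,
     and q_{,y} <> 1, q_{,z} <> 1 *)
  (forall n1 n2 y z,
     let Q d1 d2 := q (n1 + d1)%Z (n2 + d2)%Z y z in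
     let al := (-2) * gamma in let be := gamma in
     f_nondeg s (Q 0 0)%Z (Q 1 0)%Z al /\ f_nondeg s (Q 0 0)%Z (Q (-1) 0)%Z al /\
     f_nondeg s (Q 0 0)%Z (Q 0 1)%Z be /\ f_nondeg s (Q 0 0)%Z (Q 0 (-1))%Z be /\
     f_nondeg s (Q 0 0)%Z (Q (-1) (-1))%Z gamma /\
     f_nondeg s (Q 0 0)%Z (Q 1 1)%Z gamma) ->
  (forall n1 n2 y z, qy n1 n2 y z <> 1 /\ qz n1 n2 y z <> 1) ->
  (* lattice equation *)
  (forall n1 n2 y z,
     let Q d1 d2 := q (n1 + d1)%Z (n2 + d2)%Z y z in
     let al := (-2) * gamma in let be := gamma in
     fqp s (Q 0 0)%Z (Q 1 0)%Z al * fqp s (Q 0 0)%Z (Q (-1) 0)%Z al *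
     fqp s (Q 0 0)%Z (Q 0 1)%Z be * fqp s (Q 0 0)%Z (Q 0 (-1))%Z be *
     fqp s (Q 0 0)%Z (Q (-1) (-1))%Z gamma * fqp s (Q 0 0)%Z (Q 1 1)%Z gamma = 1) ->
  (* y-flow *)
  (forall n1 n2 y z,
     let Q d1 d2 := q (n1 + d1)%Z (n2 + d2)%Z y z in
     let al := (-2) * gamma in let be := gamma in
     (qy n1 n2 y z + 1) / (qy n1 n2 y z - 1) =
     fqp s (Q 0 0)%Z (Q (-1) 0)%Z al * fqp s (Q 0 0)%Z (Q 0 1)%Z be *
     fqp s (Q 0 0)%Z (Q 1 1)%Z gamma) ->
  (* z-flow *)
  (forall n1 n2 y z,
     let Q d1 d2 := q (n1 + d1)%Z (n2 + d2)%Z y z in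
     let al := (-2) * gamma in let be := gamma in
     (qz n1 n2 y z + 1) / (qz n1 n2 y z - 1) =
     fqp s (Q 0 0)%Z (Q (-1) 0)%Z al * fqp s (Q 0 0)%Z (Q 0 (-1))%Z be *
     fqp s (Q 0 0)%Z (Q (-1) (-1))%Z gamma) ->
  (* conclusion for u(2k) = q(k,j), u(2k-1) = q(k,j+1), u_{,t} = (u_{,y}+u_{,z})/2 *)
  forall (n : Z) (y z : R),
    let U m := u_of q j (n + m)%Z y z in
    exists uy uz : C,
      is_derive (fun y' => u_of q j n y' z) y uy /\
      is_derive (fun z' => u_of q j n y z') z uz /\
      (uy + uz) / 2 =
        1 / (fqp s (U 0%Z) (U 2%Z) (2 * gamma) * fqp s (U 0%Z) (U 1%Z) (- gamma) *
             fqp s (U 0%Z) (U (-1)%Z) (- gamma) - 1)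
      - 1 / (fqp s (U 0%Z) (U 1%Z) (- gamma) * fqp s (U 0%Z) (U (-1)%Z) (- gamma) *
             fqp s (U 0%Z) (U (-2)%Z) (2 * gamma) - 1).

Proof.
  intros Hs Hy Hz ND N1 L FY FZ n y z U.
  destruct (Z.Even_or_Odd n) as [[k Hk]|[k Hk]]; subst n.
  - exists (qy k j y z), (qz k j y z).
    rewrite ue. split; [apply Hy|]. split; [apply Hz|].
    unfold U.
    replace (2 * k + 0)%Z with (2 * k)%Z by lia.
    replace (2 * k + 2)%Z with (2 * (k + 1))%Z by lia.
    replace (2 * k + 1)%Z with (2 * (k + 1) - 1)%Z by lia.
    replace (2 * k + -1)%Z with (2 * k - 1)%Z by lia.
    replace (2 * k + -2)%Z with (2 * (k + -1))%Z by lia.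
    rewrite !ue, !uo.
    specialize (ND k j y z). specialize (N1 k j y z). specialize (L k j y z).
    specialize (FY k j y z). specialize (FZ k j y z). cbv beta zeta in ND, N1, L, FY, FZ.
    rewrite ?Z.add_0_r in *.
    destruct ND as (D1 & D2 & D3 & D4 & D5 & D6). destruct N1 as [N1 N2].
    rewrite (finv s _ _ ((-2) * gamma) (2 * gamma) ltac:(ring) D1).
    rewrite (finv s _ _ gamma (- gamma) eq_refl D6).
    rewrite (finv s _ _ gamma (- gamma) eq_refl D3).
    rewrite (finv s _ _ ((-2) * gamma) (2 * gamma) ltac:(ring) D2).
    apply alg_even with (b2 := fqp s (q k j y z) (q k (j + -1)%Z y z) gamma)
                        (c1 := fqp s (q k j y z) (q (k + -1)%Z (j + -1)%Z y z) gamma);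
      try apply fnz; auto.
  - unfold U. set (m := (k + 1)%Z).
    replace (2 * k + 1)%Z with (2 * m - 1)%Z by (unfold m; lia).
    exists (qy m (j + 1)%Z y z), (qz m (j + 1)%Z y z).
    rewrite uo. split; [apply Hy|]. split; [apply Hz|].
    unfold U.
    replace (2 * m - 1 + 0)%Z with (2 * m - 1)%Z by lia.
    replace (2 * m - 1 + 2)%Z with (2 * (m + 1) - 1)%Z by lia.
    replace (2 * m - 1 + 1)%Z with (2 * m)%Z by lia.
    replace (2 * m - 1 + -1)%Z with (2 * (m + -1))%Z by lia.
    replace (2 * m - 1 + -2)%Z with (2 * (m + -1) - 1)%Z by lia.
    rewrite !ue, !uo.
    specialize (ND m (j + 1)%Z y z). specialize (N1 m (j + 1)%Z y z).
    specialize (L m (j + 1)%Z y z).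
    specialize (FY m (j + 1)%Z y z). specialize (FZ m (j + 1)%Z y z). cbv beta zeta in ND, N1, L, FY, FZ.
    rewrite !Z.add_0_r in *.
    assert (ej : (j + 1 + -1)%Z = j) by lia. rewrite !ej in *.
    destruct ND as (D1 & D2 & D3 & D4 & D5 & D6). destruct N1 as [N1 N2].
    rewrite (finv s _ _ ((-2) * gamma) (2 * gamma) ltac:(ring) D1).
    rewrite (finv s _ _ gamma (- gamma) eq_refl D4).
    rewrite (finv s _ _ gamma (- gamma) eq_refl D5).
    rewrite (finv s _ _ ((-2) * gamma) (2 * gamma) ltac:(ring) D2).
    apply alg_odd with (b1 := fqp s (q m (j + 1)%Z y z) (q m (j + 1 + 1)%Z y z) gamma)
                       (c2 := fqp s (q m (j + 1)%Z y z) (q (m + 1)%Z (j + 1 + 1)%Z y z) gamma);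
      try apply fnz; auto.
Qed.
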